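(* If $N=2$ and $\mathbf A=\begin{pmatrix}1&1\\1&1\end{pmatrix}$, then there exists a real-valued $f\in V$ such that $\sum_{n\ge1}|\lambda_n(f)|=\infty$.
   Context: $\Sigma_{\mathbf A}^+=\{\omega\in\{1,\dots,N\}^{\mathbb N\cup\{0\}}:\mathbf A(\omega_m\omega_{m+1})=1\ \forall m\}$ with left shift $\sigma_{\mathbf A}$. $\mathrm{var}_m(\phi)=\sup\{|\phi(\omega)-\phi(\omega')|:\omega_k=\omega'_k,\ 0\le k\le m-1\}$; $V=\{\phi:\Sigma_{\mathbf A}^+\to\mathbb C:\mathrm{var}_m(\phi)^{1/m}\to0\}$. Transfer operator $(\mathscr L_f\phi)(\omega)=\sum_{\sigma_{\mathbf A}\omega'=\omega}e^{f(\omega')}\phi(\omega')$ acting on $V$; $\lambda_1(f),\lambda_2(f),\dots$ are its nonzero eigenvalues repeated with multiplicity, ordered by nonincreasing modulus (padded with zeros if finitely many). *)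

(* Defs.v *)
From Stdlib Require Import Reals List Arith.
From Coquelicot Require Import Coquelicot.
Open Scope R_scope.

(* Full one-sided shift on N = 2 symbols, A = all-ones matrix, so every
   sequence is admissible.  The alphabet {1,2} is encoded by bool. *)
Definition Sigma2 := nat -> bool.

Definition shift (w : Sigma2) : Sigma2 := fun n => w (S n).
Definition scons (a : bool) (w : Sigma2) : Sigma2 :=
  fun n => match n with O => a | S k => w k end.

Definition agree (m : nat) (w w' : Sigma2) : Prop :=
  forall k, (k < m)%nat -> w k = w' k.

(* phi in V  :<->  var_m(phi)^(1/m) -> 0, written out:
   for every eps > 0, eventually var_m(phi) <= eps^m. *)
Definition in_V (phi : Sigma2 -> C) : Prop :=
  forall eps : R, 0 < eps -> exists m0 : nat, forall m : nat, (m0 <= m)%nat ->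
    forall w w', agree m w w' -> Cmod (Cminus (phi w) (phi w')) <= eps ^ m.

(* transfer operator (L_f phi)(w) = sum_{sigma w' = w} e^{f w'} phi(w') *)
Definition transfer (f : Sigma2 -> R) (phi : Sigma2 -> C) : Sigma2 -> C :=
  fun w => Cplus (Cmult (RtoC (exp (f (scons true w)))) (phi (scons true w)))
                 (Cmult (RtoC (exp (f (scons false w)))) (phi (scons false w))).

Definition transfer_shift (f : Sigma2 -> R) (lam : C) (phi : Sigma2 -> C) : Sigma2 -> C :=
  fun w => Cminus (transfer f phi w) (Cmult lam (phi w)).

Definition gen_eigvec (f : Sigma2 -> R) (lam : C) (phi : Sigma2 -> C) : Prop :=
  in_V phi /\ exists k : nat, forall w, Nat.iter k (transfer_shift f lam) phi w = RtoC 0.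

Definition Csum (m : nat) (g : nat -> C) : C :=
  fold_right (fun i acc => Cplus (g i) acc) (RtoC 0) (seq 0 m).

Definition Rsum (m : nat) (g : nat -> R) : R :=
  fold_right (fun i acc => g i + acc) 0 (seq 0 m).

Definition lin_indep (m : nat) (phis : nat -> Sigma2 -> C) : Prop :=
  forall c : nat -> C,
    (forall w, Csum m (fun i => Cmult (c i) (phis i w)) = RtoC 0) ->
    forall i, (i < m)%nat -> c i = RtoC 0.

(* the algebraic multiplicity of lam as an eigenvalue of L_f on V is >= m *)
Definition mult_ge (f : Sigma2 -> R) (lam : C) (m : nat) : Prop :=
  exists phis : nat -> Sigma2 -> C,
    (forall i, (i < m)%nat -> gen_eigvec f lam (phis i)) /\ lin_indep m phis.

(* sum_n |lambda_n(f)| = +infinity, where the nonzero eigenvalues are counted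
   with algebraic multiplicity: partial sums over finitely many distinct nonzero
   eigenvalues, each weighted by (a lower bound of) its multiplicity, are
   unbounded. *)
Definition sum_abs_eigenvalues_infinite (f : Sigma2 -> R) : Prop :=
  forall M : R, exists (k : nat) (lam : nat -> C) (mu : nat -> nat),
    (forall i j, (i < k)%nat -> (j < k)%nat -> lam i = lam j -> i = j) /\
    (forall i, (i < k)%nat -> lam i <> RtoC 0 /\ mult_ge f (lam i) (mu i)) /\
    M <= Rsum k (fun i => INR (mu i) * Cmod (lam i)).

(* Main.v *)
Require Import Defs.
From Stdlib Require Import Reals List Arith Lia Lra ConstructiveEpsilon ClassicalEpsilon.
From Coquelicot Require Import Coquelicot.
Open Scope R_scope.

Definition SE (u : nat -> R) : Prop :=
  forall eps, 0 < eps -> exists N, forall n, (N <= n)%nat -> Rabs (u n) <= eps ^ n.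

Lemma SE_intro u :
  (forall eps, 0 < eps < 1 -> exists N, forall n, (N <= n)%nat -> Rabs (u n) <= eps ^ n) -> SE u.
Proof.
  intros H eps He. destruct (H (Rmin eps (1/2))) as [N HN].
  { split. apply Rmin_pos; lra. eapply Rle_lt_trans. apply Rmin_r. lra. }
  exists N. intros n Hn. eapply Rle_trans. apply HN; auto.
  apply pow_incr. split. left; apply Rmin_pos; lra. apply Rmin_l.
Qed.

Lemma pow_le1 e n : 0 <= e <= 1 -> e ^ n <= 1.
Proof. intros H. induction n; simpl. lra. assert (0 <= e ^ n) by (apply pow_le; lra). nra. Qed.

Lemma pow_le_mono e m n : 0 <= e <= 1 -> (m <= n)%nat -> e ^ n <= e ^ m.
Proof.
  intros H Hmn. replace n with (m + (n - m))%nat by lia. rewrite pow_add.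
  assert (0 <= e ^ m) by (apply pow_le; lra). assert (e ^ (n-m) <= 1) by (apply pow_le1; lra).
  assert (0 <= e ^ (n-m)) by (apply pow_le; lra). nra.
Qed.

Lemma SE_le u v : SE u -> (exists N, forall n, (N <= n)%nat -> Rabs (v n) <= Rabs (u n)) -> SE v.
Proof.
  intros Hu [N0 H0] eps He. destruct (Hu eps He) as [N HN]. exists (max N N0). intros n Hn.
  eapply Rle_trans. apply H0; lia. apply HN; lia.
Qed.

Lemma SE_plus u v : SE u -> SE v -> SE (fun n => u n + v n).
Proof.
  intros Hu Hv. apply SE_intro. intros eps He.
  destruct (Hu (eps/2)) as [N1 H1]. lra. destruct (Hv (eps/2)) as [N2 H2]. lra.
  exists (max 1 (max N1 N2)). intros n Hn.
  eapply Rle_trans. apply Rabs_triang.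
  assert (Rabs (u n) <= (eps/2)^n) by (apply H1; lia).
  assert (Rabs (v n) <= (eps/2)^n) by (apply H2; lia).
  assert ((eps/2)^n = eps^n * (/2)^n) by (unfold Rdiv; apply Rpow_mult_distr).
  assert ((/2)^n <= /2). { replace n with (1 + (n-1))%nat by lia. rewrite pow_add. simpl.
    assert ((/2)^(n-1) <= 1) by (apply pow_le1; lra). assert (0 <= (/2)^(n-1)) by (apply pow_le; lra). nra. }
  assert (0 <= eps^n) by (apply pow_le; lra). nra.
Qed.

Lemma SE_mult u w C : SE u -> 0 <= C -> (forall n, Rabs (w n) <= C) -> SE (fun n => w n * u n).
Proof.
  intros Hu HC Hw. apply SE_intro. intros eps He.
  destruct (Hu (eps/(C+1))) as [N1 H1]. apply Rdiv_lt_0_compat; lra.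
  exists (max 1 N1). intros n Hn. rewrite Rabs_mult.
  assert (Rabs (u n) <= (eps/(C+1))^n) by (apply H1; lia).
  assert ((eps/(C+1))^n = eps^n * (/(C+1))^n) by (unfold Rdiv; apply Rpow_mult_distr).
  assert ((/(C+1))^n <= /(C+1)). { replace n with (1 + (n-1))%nat by lia. rewrite pow_add. simpl.
    assert (0 < /(C+1)) by (apply Rinv_0_lt_compat; lra).
    assert (/(C+1) <= 1). { rewrite <- Rinv_1. apply Rinv_le_contravar; lra. }
    assert ((/(C+1))^(n-1) <= 1) by (apply pow_le1; lra). assert (0 <= (/(C+1))^(n-1)) by (apply pow_le; lra). nra. }
  assert (0 <= eps^n) by (apply pow_le; lra). pose proof (Hw n). pose proof (Rabs_pos (w n)).
  pose proof (Rabs_pos (u n)).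
  assert (C * /(C+1) <= 1). { apply (Rmult_le_reg_r (C+1)). lra. field_simplify; lra. }
  assert (0 <= (/(C+1))^n) by (apply pow_le; left; apply Rinv_0_lt_compat; lra).
  apply Rle_trans with (C * (eps ^ n * (/ (C + 1)) ^ n)). rewrite <- H0.
  apply Rmult_le_compat; auto.
  apply Rle_trans with (C * (eps ^ n * (/ (C + 1)))). apply Rmult_le_compat_l; auto. apply Rmult_le_compat_l; auto.
  nra.
Qed.

Lemma SE_scal u c : SE u -> SE (fun n => c * u n).
Proof. intros. apply (SE_mult u (fun _ => c) (Rabs c)); auto. apply Rabs_pos. intros; lra. Qed.

Lemma SE_unshift u : SE (fun n => u (S n)) -> SE u.
Proof.
  intros Hu. apply SE_intro. intros eps He.
  destruct (Hu (eps*eps)) as [N H]. nra.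
  exists (S (max N 1)). intros n Hn. destruct n as [|n]. lia.
  eapply Rle_trans. apply H. lia. rewrite Rpow_mult_distr. rewrite <- pow_add.
  apply pow_le_mono. lra. lia.
Qed.

Lemma SE_shift u : SE u -> SE (fun n => u (S n)).
Proof.
  intros Hu. apply SE_intro. intros eps He. destruct (Hu eps) as [N H]. lra.
  exists N. intros n Hn. eapply Rle_trans. apply H. lia. apply pow_le_mono. lra. lia.
Qed.

Definition cc (j : nat) : R := if Nat.even j then (-1) ^ (Nat.div2 j) / INR (fact j) else 0.
Definition Cp (n : nat) (x : R) : R := sum_f_R0 (fun j => cc j * x ^ j) n.

Lemma cc_even i : cc (2 * i) = cos_n i.
Proof. unfold cc, cos_n. rewrite Nat.even_even, Nat.div2_double. reflexivity. Qed.

Lemma cc_odd i : cc (S (2 * i)) = 0.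
Proof. unfold cc. replace (S (2*i)) with (2*i+1)%nat by lia. rewrite Nat.even_odd. reflexivity. Qed.

Lemma cc_bound j : Rabs (cc j) <= / INR (fact j).
Proof.
  unfold cc. destruct (Nat.even j).
  - unfold Rdiv. rewrite Rabs_mult, pow_1_abs, Rabs_inv, Rabs_pos_eq. lra. apply pos_INR.
  - rewrite Rabs_R0. left. apply Rinv_0_lt_compat, lt_0_INR, lt_O_fact.
Qed.

Lemma Cp_odd N x : Cp (S (2 * N)) x = sum_f_R0 (fun i => cos_n i * (Rsqr x) ^ i) N.
Proof.
  induction N.
  - unfold Cp. simpl. rewrite <- (cc_even 0). replace (cc 1) with 0 by (symmetry; apply (cc_odd 0)). simpl. ring.
  - replace (S (2 * S N)) with (S (S (S (2 * N)))) by lia. unfold Cp in *. do 2 rewrite tech5.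
    rewrite IHN. rewrite tech5.
    replace (S (S (2*N))) with (2 * S N)%nat by lia. rewrite cc_even.
    replace (S (2 * S N)) with (S (S (S (2*N)))) by lia.
    replace (cc (S (S (S (2*N))))) with 0. 2:{ replace (S (S (S (2*N)))) with (S (2 * S N)) by lia. rewrite cc_odd; auto. }
    unfold Rsqr. rewrite Rpow_mult_distr, <- pow_add. replace (S N + S N)%nat with (2 * S N)%nat by lia. ring.
Qed.

Lemma cos_cv x : Un_cv (fun N => Cp (S (2 * N)) x) (cos x).
Proof.
  unfold cos. destruct (exist_cos (Rsqr x)) as [l Hl]. unfold cos_in, infinite_sum in Hl.
  intros e He. destruct (Hl e He) as [N HN]. exists N. intros n Hn. rewrite Cp_odd. apply HN; auto.
Qed.

Definition aa (x : R) (j : nat) : R := Rabs x ^ j / INR (fact j).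

Lemma aa_step x j : INR (S j) >= 2 * Rabs x -> aa x (S j) <= aa x j / 2.
Proof.
  intros H. unfold aa. rewrite fact_simpl, mult_INR. simpl pow.
  assert (0 < INR (fact j)) by (apply lt_0_INR, lt_O_fact).
  assert (0 < INR (S j)) by (apply lt_0_INR; lia).
  assert (0 <= Rabs x ^ j) by (apply pow_le, Rabs_pos).
  assert (0 <= Rabs x) by apply Rabs_pos.
  unfold Rdiv. rewrite Rinv_mult.
  apply Rle_trans with (Rabs x * Rabs x ^ j * / INR (fact j) * / INR (S j)). right; ring.
  apply Rle_trans with (Rabs x ^ j * / INR (fact j) * (Rabs x * / INR (S j))). right; ring.
  apply Rle_trans with (Rabs x ^ j * / INR (fact j) * / 2). 2: right; ring.
  apply Rmult_le_compat_l. apply Rmult_le_pos; auto. left; apply Rinv_0_lt_compat; auto.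
  apply (Rmult_le_reg_r (INR (S j))). auto. rewrite Rmult_assoc, Rinv_l. 2: lra. lra.
Qed.

Lemma Cp_diff x n k : INR (S n) >= 2 * Rabs x ->
  Rabs (Cp (n + k) x - Cp n x) <= 2 * aa x (S n) - 2 * aa x (S (n + k)).
Proof.
  intros Hn. induction k.
  - rewrite Nat.add_0_r. unfold Rminus. rewrite Rplus_opp_r, Rabs_R0. lra.
  - replace (n + S k)%nat with (S (n + k)) by lia. unfold Cp at 1. rewrite tech5.
    fold (Cp (n+k) x).
    replace (Cp (n + k) x + cc (S (n + k)) * x ^ S (n + k) - Cp n x) with
      ((Cp (n + k) x - Cp n x) + cc (S (n + k)) * x ^ S (n + k)) by ring.
    eapply Rle_trans. apply Rabs_triang.
    assert (Rabs (cc (S (n + k)) * x ^ S (n + k)) <= aa x (S (n+k))).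
    { rewrite Rabs_mult, <- RPow_abs. unfold aa. unfold Rdiv. rewrite Rmult_comm.
      apply Rmult_le_compat_l. apply pow_le, Rabs_pos. apply cc_bound. }
    assert (aa x (S (S (n+k))) <= aa x (S (n+k)) / 2).
    { apply aa_step. rewrite !S_INR in *. rewrite plus_INR. pose proof (pos_INR k). lra. }
    lra.
Qed.

Lemma Cp_tail x n m : INR (S n) >= 2 * Rabs x -> (n <= m)%nat ->
  Rabs (Cp m x - Cp n x) <= 2 * aa x (S n).
Proof.
  intros H Hm. replace m with (n + (m - n))%nat by lia. eapply Rle_trans. apply Cp_diff; auto.
  assert (0 <= aa x (S (n + (m - n)))). { unfold aa. apply Rmult_le_pos. apply pow_le, Rabs_pos.
    left; apply Rinv_0_lt_compat, lt_0_INR, lt_O_fact. } lra.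
Qed.

Lemma cos_tail x n : INR (S n) >= 2 * Rabs x -> Rabs (cos x - Cp n x) <= 2 * aa x (S n).
Proof.
  intros H. apply Rle_plus_epsilon. intros e He.
  destruct (cos_cv x e He) as [N HN].
  pose (m := max N n). assert (HNm : (N <= m)%nat) by lia.
  specialize (HN m HNm). unfold Rdist in HN.
  replace (cos x - Cp n x) with ((Cp (S (2*m)) x - Cp n x) - (Cp (S (2 * m)) x - cos x)) by ring.
  eapply Rle_trans. apply Rabs_triang. rewrite Rabs_Ropp.
  assert (Rabs (Cp (S (2 * m)) x - Cp n x) <= 2 * aa x (S n)) by (apply Cp_tail; auto; lia).
  lra.
Qed.

Lemma nat_large (r : R) : exists N, forall n, (N <= n)%nat -> INR n >= r.
Proof.
  destruct (INR_unbounded r) as [N HN]. exists N. intros n Hn. apply le_INR in Hn. lra.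
Qed.

Lemma cos_SE x : SE (fun n => cos x - Cp n x).
Proof.
  apply SE_intro. intros eps He.
  pose proof (cv_speed_pow_fact (Rabs x / eps)) as Hc.
  destruct (Hc 1 ltac:(lra)) as [N1 H1].
  destruct (nat_large (2 * Rabs x)) as [N2 H2].
  exists (max N1 N2). intros n Hn.
  eapply Rle_trans. apply cos_tail. rewrite S_INR. specialize (H2 n ltac:(lia)). lra.
  specialize (H1 n ltac:(lia)). unfold Rdist in H1. rewrite Rminus_0_r in H1.
  assert (0 < INR (fact n)) by (apply lt_0_INR, lt_O_fact).
  assert (Hf : 0 <= (Rabs x / eps) ^ n / INR (fact n)).
  { apply Rmult_le_pos. apply pow_le. apply Rmult_le_pos. apply Rabs_pos. left; apply Rinv_0_lt_compat; lra.
    left; apply Rinv_0_lt_compat; auto. }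
  rewrite Rabs_pos_eq in H1 by auto.
  assert (Rabs x ^ n / INR (fact n) <= eps ^ n).
  { unfold Rdiv in *. rewrite Rpow_mult_distr in H1. rewrite pow_inv in H1.
    assert (0 < eps ^ n) by (apply pow_lt; lra).
    apply (Rmult_le_reg_r (/ eps ^ n)). apply Rinv_0_lt_compat; auto. rewrite Rinv_r by lra.
    left. replace (Rabs x ^ n * / INR (fact n) * / eps ^ n) with (Rabs x ^ n * / eps ^ n * / INR (fact n)) by ring. auto. }
  specialize (H2 n ltac:(lia)).
  unfold aa. rewrite fact_simpl, mult_INR. simpl pow.
  assert (0 < INR (S n)) by (apply lt_0_INR; lia).
  replace (2 * (Rabs x * Rabs x ^ n / (INR (S n) * INR (fact n)))) with
     ((2 * Rabs x / INR (S n)) * (Rabs x ^ n / INR (fact n))) by (field; lra).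
  assert (2 * Rabs x / INR (S n) <= 1). { apply (Rmult_le_reg_r (INR (S n))); auto. field_simplify; try lra. rewrite S_INR. lra. }
  assert (0 <= Rabs x ^ n / INR (fact n)). { apply Rmult_le_pos. apply pow_le, Rabs_pos. left; apply Rinv_0_lt_compat; auto. }
  assert (0 <= 2 * Rabs x / INR (S n)). { apply Rmult_le_pos. pose proof (Rabs_pos x); lra. left; apply Rinv_0_lt_compat; auto. }
  nra.
Qed.

Definition kap : R := 12.
Definition dd (j : nat) : R := match j with O => 1 | S i => cc (S i) - kap * cc i end.
Definition Qp (n : nat) (x : R) : R := sum_f_R0 (fun j => dd j * x ^ j) n.
Definition qf (x : R) : R := (1 - kap * x) * cos x.

Lemma cc0 : cc 0 = 1.
Proof. unfold cc. simpl. lra. Qed.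

Lemma Qp_eq n x : Qp (S n) x = Cp (S n) x - kap * x * Cp n x.
Proof.
  induction n.
  - unfold Qp, Cp. simpl. rewrite cc0. ring.
  - unfold Qp in *. rewrite tech5, IHn. unfold Cp. rewrite (tech5 _ (S n)). rewrite (tech5 _ n).
    simpl dd. simpl pow. ring.
Qed.

Lemma SE_ext u v : (forall n, u n = v n) -> SE u -> SE v.
Proof. intros H Hu. apply (SE_le u); auto. exists O. intros. rewrite H. lra. Qed.

Lemma q_SE x : SE (fun n => qf x - Qp n x).
Proof.
  apply SE_unshift.
  apply (SE_ext (fun n => (cos x - Cp (S n) x) + (- (kap * x)) * (cos x - Cp n x))).
  { intros n. rewrite Qp_eq. unfold qf. ring. }
  apply SE_plus. apply (SE_shift (fun n => cos x - Cp n x)). apply cos_SE.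
  apply SE_scal. apply cos_SE.
Qed.

Lemma Cp1_bound m : 1/6 <= Cp m 1 <= 1.
Proof.
  destruct m as [|[|m]].
  - unfold Cp. simpl. rewrite cc0. lra.
  - unfold Cp. simpl. rewrite cc0. unfold cc. simpl. lra.
  - assert (H2 : Cp 2 1 = 1/2). { unfold Cp. simpl. rewrite cc0. unfold cc. simpl. lra. }
    pose proof (Cp_tail 1 2 (S (S m))) as H. rewrite H2 in H.
    assert (aa 1 3 = 1/6). { unfold aa. rewrite Rabs_R1. simpl. lra. }
    rewrite H0 in H. assert (Rabs (Cp (S (S m)) 1 - 1 / 2) <= 2 * (1 / 6)).
    { apply H. rewrite Rabs_R1. simpl. lra. lia. }
    apply Rabs_le_between in H1. lra.
Qed.

Lemma cos1_bound : 1/6 <= cos 1 <= 5/6.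
Proof.
  assert (H2 : Cp 2 1 = 1/2). { unfold Cp. simpl. rewrite cc0. unfold cc. simpl. lra. }
  pose proof (cos_tail 1 2) as H. rewrite H2 in H.
  assert (aa 1 3 = 1/6). { unfold aa. rewrite Rabs_R1. simpl. lra. }
  rewrite H0 in H. assert (Rabs (cos 1 - 1/2) <= 2 * (1/6)). { apply H. rewrite Rabs_R1. simpl. lra. }
  apply Rabs_le_between in H1. lra.
Qed.

Definition bb (n : nat) : R := - Qp (S n) 1.
Definition binf : R := (kap - 1) * cos 1.

Lemma bb_ge1 n : 1 <= bb n.
Proof. unfold bb. rewrite Qp_eq. pose proof (Cp1_bound (S n)). pose proof (Cp1_bound n). unfold kap. lra. Qed.

Lemma binf_ge1 : 1 <= binf.
Proof. unfold binf, kap. pose proof cos1_bound. lra. Qed.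

Definition Bo (o : option nat) : R := match o with Some n => bb n | None => binf end.

Lemma Bo_ge1 o : 1 <= Bo o.
Proof. destruct o; simpl. apply bb_ge1. apply binf_ge1. Qed.

Definition fz (w : Sigma2) : option nat :=
  match excluded_middle_informative (exists n, w n = true) with
  | left H => Some (proj1_sig (epsilon_smallest (fun n => w n = true) (fun n => Bool.bool_dec (w n) true) H))
  | right _ => None
  end.

Lemma fz_spec w : (exists n, fz w = Some n /\ w n = true /\ forall k, (k < n)%nat -> w k = false)
   \/ (fz w = None /\ forall k, w k = false).
Proof.
  unfold fz. destruct (excluded_middle_informative _) as [H|H].
  - left. destruct (epsilon_smallest _ _ H) as [m [Hm1 Hm2]]. simpl. exists m. repeat split; auto.
    intros k Hk. destruct (w k) eqn:E; auto. specialize (Hm2 k E). lia.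
  - right. split; auto. intros k. destruct (w k) eqn:E; auto. exfalso; apply H; eauto.
Qed.

Lemma fz_some w n : w n = true -> (forall k, (k < n)%nat -> w k = false) -> fz w = Some n.
Proof.
  intros H1 H2. destruct (fz_spec w) as [[m [E [Hm1 Hm2]]]|[E Hw]].
  - rewrite E. f_equal. destruct (Nat.lt_trichotomy m n) as [h|[h|h]]; auto.
    + rewrite H2 in Hm1; auto; discriminate.
    + rewrite Hm2 in H1; auto; discriminate.
  - rewrite Hw in H1; discriminate.
Qed.

Lemma fz_none w : (forall k, w k = false) -> fz w = None.
Proof.
  intros H. destruct (fz_spec w) as [[m [E [Hm1 Hm2]]]|[E Hw]]; auto. rewrite H in Hm1; discriminate.
Qed.

Lemma fz_true w : fz (scons true w) = Some 0%nat.
Proof. apply fz_some. reflexivity. intros; lia. Qed.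

Lemma fz_false w : fz (scons false w) = option_map S (fz w).
Proof.
  destruct (fz_spec w) as [[m [E [Hm1 Hm2]]]|[E Hw]]; rewrite E; simpl.
  - apply fz_some. exact Hm1. intros k Hk. destruct k. reflexivity. simpl. apply Hm2. lia.
  - apply fz_none. intros [|k]; simpl; auto.
Qed.

Definition ge_opt (m : nat) (o : option nat) : Prop :=
  match o with Some n => (m <= n)%nat | None => True end.

Lemma fz_agree m w w' : agree m w w' -> fz w = fz w' \/ (ge_opt m (fz w) /\ ge_opt m (fz w')).
Proof.
  intros Ha.
  destruct (fz_spec w) as [[n [E [Hn1 Hn2]]]|[E Hw]];
  destruct (fz_spec w') as [[n' [E' [Hn1' Hn2']]]|[E' Hw']]; rewrite E, E'; simpl.
  - destruct (Nat.lt_ge_cases n m).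
    + left. rewrite <- E'. symmetry. apply fz_some. rewrite <- Ha; auto.
      intros k Hk. rewrite <- Ha by lia. auto.
    + destruct (Nat.lt_ge_cases n' m).
      * left. rewrite <- E. apply fz_some. rewrite Ha; auto. intros k Hk. rewrite Ha by lia. auto.
      * right; auto.
  - destruct (Nat.lt_ge_cases n m).
    + rewrite Ha in Hn1 by auto. rewrite Hw' in Hn1. discriminate.
    + right; auto.
  - destruct (Nat.lt_ge_cases n' m).
    + rewrite <- Ha in Hn1' by auto. rewrite Hw in Hn1'. discriminate.
    + right; auto.
  - left; auto.
Qed.

Lemma half_pow a m : 0 <= a -> (1 <= m)%nat -> 2 * (a/2)^m <= a^m.
Proof.
  intros Ha Hm. unfold Rdiv. rewrite Rpow_mult_distr.
  assert ((/2)^m <= /2). { replace m with (1 + (m-1))%nat by lia. rewrite pow_add. simpl.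
    assert ((/2)^(m-1) <= 1) by (apply pow_le1; lra). assert (0 <= (/2)^(m-1)) by (apply pow_le; lra). nra. }
  assert (0 <= a^m) by (apply pow_le; lra). nra.
Qed.

Lemma inV_opt (G : option nat -> R) : SE (fun n => G (Some n) - G None) ->
  in_V (fun w => RtoC (G (fz w))).
Proof.
  intros HS eps He. set (e := Rmin eps 1 / 2).
  assert (Hm1 : 0 < Rmin eps 1) by (apply Rmin_pos; lra).
  assert (He0 : 0 < e) by (unfold e; lra).
  assert (He1 : e <= 1) by (unfold e; pose proof (Rmin_r eps 1); lra).
  destruct (HS e He0) as [N HN]. exists (max N 1). intros m Hm w w' Ha.
  rewrite <- RtoC_minus, Cmod_R.
  assert (aux : forall o, ge_opt m o -> Rabs (G o - G None) <= e ^ m).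
  { intros [n|] Ho; simpl in Ho.
    - eapply Rle_trans. apply HN. lia. apply pow_le_mono. lra. auto.
    - unfold Rminus. rewrite Rplus_opp_r, Rabs_R0. apply pow_le; lra. }
  assert (Hfin : 2 * e ^ m <= eps ^ m).
  { unfold e. eapply Rle_trans. apply half_pow. lra. lia. apply pow_incr. split. lra. apply Rmin_l. }
  destruct (fz_agree m w w' Ha) as [Eq|[H1 H2]].
  - rewrite Eq. unfold Rminus. rewrite Rplus_opp_r, Rabs_R0. apply pow_le; lra.
  - replace (G (fz w) - G (fz w')) with ((G (fz w) - G None) - (G (fz w') - G None)) by ring.
    eapply Rle_trans. apply Rabs_triang. rewrite Rabs_Ropp.
    pose proof (aux _ H1). pose proof (aux _ H2). lra.
Qed.

Lemma inV_shift (phi : Sigma2 -> R) : in_V (fun w => RtoC (phi w)) ->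
  in_V (fun w => RtoC (if w 0%nat then phi (shift w) else 0)).
Proof.
  intros H eps He. set (e := Rmin eps (1/2)).
  assert (He0 : 0 < e) by (unfold e; apply Rmin_pos; lra).
  assert (He1 : e <= 1) by (unfold e; pose proof (Rmin_r eps (1/2)); lra).
  destruct (H (e*e)) as [m0 Hm0]. nra.
  exists (S (max m0 1)). intros m Hm w w' Ha.
  destruct m as [|m]. lia.
  assert (E0 : w 0%nat = w' 0%nat) by (apply Ha; lia).
  assert (Ha' : agree m (shift w) (shift w')). { intros k Hk. unfold shift. apply Ha. lia. }
  rewrite <- E0. destruct (w 0%nat).
  - eapply Rle_trans. apply (Hm0 m). lia. auto.
    rewrite Rpow_mult_distr, <- pow_add. eapply Rle_trans. apply pow_le_mono with (m := S m). lra. lia.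
    apply pow_incr. split. lra. apply Rmin_l.
  - rewrite <- RtoC_minus, Cmod_R. unfold Rminus. rewrite Rplus_opp_r, Rabs_R0. apply pow_le; lra.
Qed.

Definition fpot (w : Sigma2) : R := if w 0%nat then ln (Bo (fz (shift w))) else 0.

Lemma ln_le_sub1 z : 0 < z -> ln z <= z - 1.
Proof.
  intros Hz. pose proof (exp_ineq1_le (z - 1)).
  rewrite <- (ln_exp (z-1)). apply ln_le; auto. lra.
Qed.

Lemma ln_lip x y : 1 <= x -> 1 <= y -> Rabs (ln x - ln y) <= Rabs (x - y).
Proof.
  intros Hx Hy.
  assert (K : forall a b, 1 <= a -> 1 <= b -> b <= a -> ln a - ln b <= a - b).
  { intros a b Ha Hb Hab. rewrite <- ln_div by lra. eapply Rle_trans. apply ln_le_sub1.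
    apply Rdiv_lt_0_compat; lra. apply (Rmult_le_reg_r b). lra.
    unfold Rdiv. field_simplify; try lra. nra. }
  destruct (Rle_dec y x).
  - assert (ln y <= ln x) by (apply ln_le; lra). rewrite !Rabs_pos_eq by lra. apply K; auto.
  - assert (ln x <= ln y) by (apply ln_le; lra). rewrite !Rabs_left1 by lra.
    assert (ln y - ln x <= y - x) by (apply K; lra). lra.
Qed.

Lemma fpot_V : in_V (fun w => RtoC (fpot w)).
Proof.
  apply (inV_shift (fun w => ln (Bo (fz w)))).
  apply (inV_opt (fun o => ln (Bo o))).
  apply (SE_le (fun n => qf 1 - Qp (S n) 1)).
  - apply (SE_shift (fun n => qf 1 - Qp n 1)). apply q_SE.
  - exists O. intros n _. simpl.
    replace (qf 1 - Qp (S n) 1) with (bb n - binf).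
    apply ln_lip. apply bb_ge1. apply binf_ge1.
    unfold bb, binf, qf. ring.
Qed.

Definition tt (k : nat) : R := PI / 2 + INR k * PI.

Lemma tt_gt1 k : 1 < tt k.
Proof. unfold tt. pose proof PI2_3_2. pose proof (pos_INR k). pose proof PI_RGT_0. nra. Qed.

Lemma qf_tt k : qf (tt k) = 0.
Proof.
  unfold qf. rewrite cos_eq_0_1. ring. exists (Z.of_nat k). unfold tt. rewrite <- INR_IZR_INZ. ring.
Qed.

Definition gfun (t : R) (n : nat) : R := (/ t) ^ n * Qp n t - t * Qp n 1.
Definition ginf (t : R) : R := t * binf.
Definition Go (t : R) (o : option nat) : R := match o with Some n => gfun t n | None => ginf t end.

Lemma gfun0 t : gfun t 0 = 1 - t.
Proof. unfold gfun, Qp. simpl. ring. Qed.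

Lemma eig_some t n : t <> 0 -> bb n * gfun t 0 + gfun t (S n) = / t * gfun t n.
Proof.
  intros Ht. rewrite gfun0. unfold gfun, bb. unfold Qp. rewrite !tech5. fold (Qp n t). fold (Qp n 1).
  rewrite pow1. simpl pow.
  assert (XT : (/ t) ^ n * t ^ n = 1). { rewrite <- Rpow_mult_distr, Rinv_l by auto. apply pow1. }
  set (X := (/t)^n) in *. set (T := t ^ n) in *.
  replace (/ t * X * (Qp n t + dd (S n) * (t * T))) with (/ t * X * Qp n t + dd (S n) * (X * T) * (/ t * t)) by ring.
  rewrite XT, Rinv_l by auto. field; auto.
Qed.

Lemma eig_none t : t <> 0 -> binf * gfun t 0 + ginf t = / t * ginf t.
Proof. intros Ht. rewrite gfun0. unfold ginf. field. auto. Qed.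

Lemma Go_V k : in_V (fun w => RtoC (Go (tt k) (fz w))).
Proof.
  apply inV_opt. simpl. set (t := tt k). pose proof (tt_gt1 k) as Ht. fold t in Ht.
  apply (SE_ext (fun n => (- (/t)^n) * (qf t - Qp n t) + t * (qf 1 - Qp n 1))).
  { intros n. unfold gfun, ginf, binf. unfold t. rewrite qf_tt. fold t. unfold qf. ring. }
  apply SE_plus.
  - apply (SE_mult (fun n => qf t - Qp n t) (fun n => - (/t)^n) 1). apply q_SE. lra.
    intros n. rewrite Rabs_Ropp, Rabs_pos_eq. apply pow_le1. split. left; apply Rinv_0_lt_compat; lra.
    rewrite <- Rinv_1. apply Rinv_le_contravar; lra. apply pow_le. left; apply Rinv_0_lt_compat; lra.
  - apply SE_scal. apply q_SE.
Qed.

Lemma eig_eq k w :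
  transfer_shift fpot (RtoC (/ tt k)) (fun w => RtoC (Go (tt k) (fz w))) w = RtoC 0.
Proof.
  pose proof (tt_gt1 k) as Ht.
  unfold transfer_shift, transfer.
  rewrite <- !RtoC_mult, <- RtoC_plus, <- RtoC_minus. f_equal.
  change (fpot (scons true w)) with (ln (Bo (fz w))).
  change (fpot (scons false w)) with 0.
  rewrite exp_ln by (pose proof (Bo_ge1 (fz w)); lra). rewrite exp_0.
  rewrite fz_true, fz_false.
  destruct (fz w) as [n|]; simpl.
  - rewrite <- eig_some by lra. ring.
  - rewrite <- eig_none by lra. ring.
Qed.

Lemma fold_shift (g : nat -> R) l a b :
  fold_right (fun i acc => g i + acc) (a + b) l = fold_right (fun i acc => g i + acc) a l + b.
Proof. induction l; simpl. auto. rewrite IHl. ring. Qed.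

Lemma Rsum_S m g : Rsum (S m) g = Rsum m g + g m.
Proof.
  unfold Rsum. rewrite seq_S, fold_right_app. simpl.
  replace (g m + 0) with (0 + g m) by ring. apply fold_shift.
Qed.

Lemma Rsum_le m g h : (forall i, (i < m)%nat -> g i <= h i) -> Rsum m g <= Rsum m h.
Proof.
  induction m; intros H. unfold Rsum; simpl; lra.
  rewrite !Rsum_S. assert (g m <= h m) by (apply H; lia).
  assert (Rsum m g <= Rsum m h) by (apply IHm; intros; apply H; lia). lra.
Qed.

Lemma harm K : ln (INR (S K)) <= Rsum K (fun i => / INR (S i)).
Proof.
  induction K.
  - unfold Rsum. simpl. rewrite ln_1. lra.
  - rewrite Rsum_S.
    assert (ln (INR (S (S K))) - ln (INR (S K)) <= / INR (S K)).
    { assert (0 < INR (S K)) by (apply lt_0_INR; lia).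
      rewrite <- ln_div by (try apply lt_0_INR; lia).
      eapply Rle_trans. apply ln_le_sub1. apply Rdiv_lt_0_compat; auto. apply lt_0_INR; lia.
      rewrite (S_INR (S K)). right. field. lra. }
    lra.
Qed.

Theorem theoremA2 :
  exists f : Sigma2 -> R,
    in_V (fun w => RtoC (f w)) /\ sum_abs_eigenvalues_infinite f.
Proof.
  exists fpot. split. apply fpot_V.
  intros M.
  destruct (INR_unbounded (exp (4 * M))) as [K HK].
  exists K, (fun i => RtoC (/ tt i)), (fun _ => 1%nat). split; [|split].
  - intros i j Hi Hj E. injection E as E.
    pose proof (tt_gt1 i). pose proof (tt_gt1 j).
    assert (tt i = tt j). { rewrite <- (Rinv_inv (tt i)), <- (Rinv_inv (tt j)), E. auto. }
    unfold tt in H1. pose proof PI_RGT_0.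
    assert (INR i = INR j) by nra. apply INR_eq; auto.
  - intros i Hi. pose proof (tt_gt1 i). split.
    + intros E. injection E as E. assert (0 < / tt i) by (apply Rinv_0_lt_compat; lra). lra.
    + exists (fun _ w => RtoC (Go (tt i) (fz w))). split.
      * intros j Hj. split. apply Go_V. exists 1%nat. intros w. simpl. apply eig_eq.
      * intros c Hc j Hj. assert (j = 0%nat) by lia. subst j.
        specialize (Hc (fun _ => true)). unfold Csum in Hc. simpl in Hc.
        rewrite (fz_some _ 0) in Hc by (auto; intros; lia). simpl in Hc.
        rewrite gfun0 in Hc.
        destruct (c 0%nat) as [a b]. unfold Cplus, Cmult, RtoC in Hc. simpl in Hc.
        injection Hc as H1 H2. unfold RtoC. f_equal; nra.
  - eapply Rle_trans with (Rsum K (fun i => / INR (S i)) / 4).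
    + assert (4 * M <= ln (INR K)).
      { destruct K. simpl in HK. pose proof (exp_pos (4*M)). lra.
        rewrite <- (ln_exp (4*M)). apply ln_le. apply exp_pos. lra. }
      assert (ln (INR K) <= ln (INR (S K))). { destruct K. simpl in HK. pose proof (exp_pos (4*M)). lra.
        apply ln_le. apply lt_0_INR; lia. rewrite (S_INR (S K)); lra. }
      pose proof (harm K). lra.
    + assert (Rsum K (fun i => / INR (S i)) / 4 = Rsum K (fun i => / (4 * INR (S i)))).
      { clear. induction K. unfold Rsum; simpl; lra. rewrite !Rsum_S, <- IHK.
        field; repeat split; try (apply not_0_INR; lia); lra. }
      rewrite H. apply Rsum_le. intros i Hi. change (INR 1) with 1. rewrite Rmult_1_l.
      rewrite Cmod_R. pose proof (tt_gt1 i). rewrite Rabs_pos_eq by (left; apply Rinv_0_lt_compat; lra).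
      apply Rinv_le_contravar. lra. unfold tt. rewrite S_INR. pose proof PI_4. pose proof (pos_INR i).
      pose proof PI_RGT_0. nra.
Qed.
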